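(* Let $r\in\mathbb{N}$ be fixed, let $\chi:\mathbb{R}_+\to\mathbb{R}$ be a kernel and let $f\in CB_{\mathrm{comp}}(\mathbb{R}_+)$. Then $$\lim_{w\to\infty}\left\|E_{w,r}^{\chi}f-f\right\|_\infty=0.$$
   Context: $\mathbb{R}_+=(0,\infty)$. A kernel is a continuous function $\chi:\mathbb{R}_+\to\mathbb{R}$ such that: (1) $\int_{\mathbb{R}_+}|\chi(x)|\frac{dx}{x}<\infty$ and $\chi$ is bounded on $[1/e,e]$; (2) $\sum_{k\in\mathbb{Z}}\chi(e^{-k}u)=1$ for every $u\in\mathbb{R}_+$, and $M_0(\chi):=\sup_{u\in\mathbb{R}_+}\sum_{k\in\mathbb{Z}}|\chi(e^{-k}u)|<+\infty$; (3) $\lim_{\gamma\to\infty}\sum_{|k-\log u|>\gamma}|\chi(e^{-k}u)|=0$ uniformly with respect to $u\in\mathbb{R}_+$. For $r\in\mathbb{N}$, $w>0$ and a locally integrable $f:\mathbb{R}_+\to\mathbb{R}$, $$\left(E_{w,r}^{\chi}f\right)(x):=\sum_{k\in\mathbb{Z}}\chi(e^{-k}x^{w})\, w^{r}\int_1^{e^{1/w}}\!\!\cdots\!\int_1^{e^{1/w}}\sum_{m=1}^{r}(-1)^{1-m}\binom{r}{m}f\!\left(e^{k/w}(t_1\cdots t_r)^{m/r}\right)\frac{dt_1}{t_1}\cdots\frac{dt_r}{t_r},\quad x\in\mathbb{R}_+.$$ $CB_{\mathrm{comp}}(\mathbb{R}_+)$ is the space of bounded continuous functions on $\mathbb{R}_+$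 with compact support contained in $\mathbb{R}_+$; $\|\cdot\|_\infty$ is the sup-norm on $\mathbb{R}_+$. *)

(* Defs.v *)
From Stdlib Require Import Reals ZArith.
From Coquelicot Require Import Coquelicot.
Open Scope R_scope.

Definition is_sumZ (a : Z -> R) (l : R) : Prop :=
  exists l1 l2,
    is_series (fun n : nat => a (Z.of_nat n)) l1 /\
    is_series (fun n : nat => a (- Z.of_nat n - 1)%Z) l2 /\ l = l1 + l2.

Definition ex_sumZ (a : Z -> R) : Prop := exists l, is_sumZ a l.

Definition sumZ (a : Z -> R) : R :=
  Series (fun n : nat => a (Z.of_nat n)) + Series (fun n : nat => a (- Z.of_nat n - 1)%Z).

Definition is_kernel (chi : R -> R) : Prop :=
  (forall x, 0 < x -> continuous chi x) /\
  ex_RInt_gen (fun x => Rabs (chi x) / x) (at_right 0) (Rbar_locally p_infty) /\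
  (exists B, forall x, / exp 1 <= x <= exp 1 -> Rabs (chi x) <= B) /\
  (forall u, 0 < u -> is_sumZ (fun k => chi (exp (- IZR k) * u)) 1) /\
  (exists M0, forall u, 0 < u ->
     ex_sumZ (fun k => Rabs (chi (exp (- IZR k) * u))) /\
     sumZ (fun k => Rabs (chi (exp (- IZR k) * u))) <= M0) /\
  (forall eps, 0 < eps -> exists g0, forall g, g0 < g -> forall u, 0 < u ->
     Rabs (sumZ (fun k => if Rlt_dec g (Rabs (IZR k - ln u))
                          then Rabs (chi (exp (- IZR k) * u)) else 0)) < eps).

Definition CB_comp (f : R -> R) : Prop :=
  (forall x, 0 < x -> continuous f x) /\
  (exists B, forall x, 0 < x -> Rabs (f x) <= B) /\
  (exists a b, 0 < a /\ a <= b /\ forall x, 0 < x -> (x < a \/ b < x) -> f x = 0).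

(* Iterated integral int_1^{e^{1/w}} ... int_1^{e^{1/w}} g(t_1 ... t_n) dt_1/t_1 ... dt_n/t_n,
   accumulating the product of the integration variables in the argument p:
   iter_int w 0 g p = g p,
   iter_int w (n+1) g p = int_1^{e^{1/w}} iter_int w n g (p * t) dt / t. *)
Fixpoint iter_int (w : R) (n : nat) (g : R -> R) (p : R) : R :=
  match n with
  | O => g p
  | S n' => RInt (fun t => iter_int w n' g (p * t) / t) 1 (exp (/ w))
  end.

Definition E_integrand (r : nat) (w : R) (f : R -> R) (k : Z) (P : R) : R :=
  sum_f_R0 (fun i : nat =>
     let m := S i in
     powerRZ (-1) (1 - Z.of_nat m) * Binomial.C r m
       * f (exp (IZR k / w) * Rpower P (INR m / INR r))) (r - 1).

Definition E_op (chi : R -> R) (r : nat) (w : R) (f : R -> R) (x : R) : R :=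
  sumZ (fun k => chi (exp (- IZR k) * Rpower x w)
                 * (w ^ r * iter_int w r (E_integrand r w f k) 1)).

(* Main.v *)
Require Import Defs.
From Stdlib Require Import Reals ZArith Lra Lia.
From Coquelicot Require Import Coquelicot.
Open Scope R_scope.

Lemma loc_pos p0 : 0 < p0 -> locally p0 (fun p => 0 < p).
Proof.
  intros H. exists (mkposreal (p0/2) ltac:(lra)). intros y Hy.
  change (Rabs (y - p0) < p0/2) in Hy. apply Rabs_def2 in Hy. lra.
Qed.

Lemma cont_pos_ex_RInt (F : R -> R) a b :
  (forall q, 0 < q -> continuous F q) -> 0 < a -> 0 < b -> ex_RInt F a b.
Proof.
  intros HF Ha Hb. apply (@ex_RInt_continuous R_CompleteNormedModule). intros z [Hz _]. apply HF.
  assert (0 < Rmin a b) by (apply Rmin_glb_lt; auto). lra.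
Qed.

Lemma cont_div (H : R -> R) :
  (forall q, 0 < q -> continuous H q) ->
  forall q, 0 < q -> continuous (fun u => H u / u) q.
Proof.
  intros HH q Hq. unfold Rdiv.
  apply (continuous_mult H (fun u => / u)). apply HH; auto.
  apply continuous_Rinv. lra.
Qed.

Lemma iter_S_eq w n h p : 0 < w -> 0 < p -> (forall q, 0 < q -> continuous (iter_int w n h) q) ->
  iter_int w (S n) h p = RInt (fun u => iter_int w n h u / u) 1 (p * exp (/ w))
                          - RInt (fun u => iter_int w n h u / u) 1 p.
Proof.
  intros Hw Hp HC. simpl.
  set (F := fun u => iter_int w n h u / u).
  assert (HF : forall q, 0 < q -> continuous F q) by (apply cont_div; auto).
  assert (HE : 0 < exp (/ w)) by apply exp_pos.
  transitivity (RInt (fun y => scal p (F (p * y + 0))) 1 (exp (/ w))).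
  { apply RInt_ext. intros x Hx.
    assert (0 < x). { assert (Rmin 1 (exp (/w)) > 0) by (apply Rmin_glb_lt; lra). lra. }
    unfold F. rewrite Rplus_0_r. unfold scal; simpl; unfold mult; simpl. field. split; lra. }
  assert (Hex : ex_RInt F (p * 1 + 0) (p * exp (/ w) + 0)).
  { apply cont_pos_ex_RInt; auto; nra. }
  etransitivity. exact (@RInt_comp_lin R_CompleteNormedModule F p 0 1 (exp (/w)) Hex).
  rewrite !Rmult_1_r, !Rplus_0_r.
  assert (C := RInt_Chasles F 1 p (p * exp (/ w))
     ltac:(apply cont_pos_ex_RInt; auto; lra) ltac:(apply cont_pos_ex_RInt; auto; nra)).
  unfold plus in C; simpl in C. lra.
Qed.

Lemma RInt1_cont (F : R -> R) q : (forall q, 0 < q -> continuous F q) -> 0 < q ->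
  continuous (fun b => RInt F 1 b) q.
Proof.
  intros HF Hq. apply (continuous_RInt_1 F 1 q).
  apply (filter_imp (fun p => 0 < p)). 2: apply loc_pos; auto.
  intros x Hx. apply (@RInt_correct R_CompleteNormedModule). apply cont_pos_ex_RInt; auto; lra.
Qed.

Lemma iter_cont w n h : 0 < w -> (forall q, 0 < q -> continuous h q) ->
  forall p, 0 < p -> continuous (iter_int w n h) p.
Proof.
  intros Hw Hh. induction n as [|n IH].
  - exact Hh.
  - intros p0 Hp0.
    set (F := fun u => iter_int w n h u / u).
    assert (HF : forall q, 0 < q -> continuous F q) by (apply cont_div; auto).
    assert (HE : 0 < exp (/ w)) by apply exp_pos.
    apply (continuous_ext_loc (T:=R_UniformSpace) (U:=R_UniformSpace) _ (fun p : R => RInt F 1 (p * exp (/ w)) - RInt F 1 p)).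
    + apply (filter_imp (fun p => 0 < p)). 2: apply loc_pos; auto.
      intros p Hp. rewrite iter_S_eq; auto.
    + apply (continuous_minus (U:=R_UniformSpace) (V:=R_NormedModule) (fun p : R => RInt F 1 (p * exp (/ w))) (fun p : R => RInt F 1 p)).
      * apply (continuous_comp (fun p => p * exp (/ w)) (fun b => RInt F 1 b)).
        -- apply (continuous_mult (fun p : R => p) (fun _ => exp (/ w))).
           apply continuous_id. apply continuous_const.
        -- apply RInt1_cont; auto. nra.
      * apply RInt1_cont; auto.
Qed.

Lemma is_RInt_inv w : 0 < w -> is_RInt (fun t => / t) 1 (exp (/ w)) (/ w).
Proof.
  intros Hw.
  assert (HE : 1 < exp (/ w)).
  { assert (0 < / w) by (apply Rinv_0_lt_compat; lra). assert (Hx1 := exp_ineq1 (/ w) ltac:(lra)). lra. }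
  replace (/ w) with (minus (ln (exp (/ w))) (ln 1)) at 2.
  2: { rewrite ln_exp, ln_1. unfold minus, plus, opp; simpl. ring. }
  apply (is_RInt_derive (V:=R_CompleteNormedModule) ln (fun t => / t)).
  - intros x Hx. rewrite Rmin_left in Hx by lra. apply is_derive_Reals.
    apply derivable_pt_lim_ln. lra.
  - intros x Hx. rewrite Rmin_left in Hx by lra. apply continuous_Rinv. lra.
Qed.

Lemma iter_bound w n h c M : 0 < w -> (forall q, 0 < q -> continuous h q) ->
  forall p, 0 < p -> (forall q, p <= q <= p * exp (INR n / w) -> Rabs (h q - c) <= M) ->
  Rabs (iter_int w n h p - c / w ^ n) <= M / w ^ n.
Proof.
  intros Hw Hh. induction n as [|n IH]; intros p Hp Hq.
  - simpl. replace (c / 1) with c by field. replace (M / 1) with M by field.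
    apply Hq. simpl. rewrite Rdiv_0_l, exp_0. lra.
  - assert (HE : 1 < exp (/ w)).
    { assert (0 < / w) by (apply Rinv_0_lt_compat; lra). assert (Hx1 := exp_ineq1 (/ w) ltac:(lra)). lra. }
    set (K := fun t => iter_int w n h (p * t) / t).
    assert (HK : is_RInt K 1 (exp (/ w)) (iter_int w (S n) h p)).
    { simpl. apply (@RInt_correct R_CompleteNormedModule).
      apply (@ex_RInt_continuous R_CompleteNormedModule). intros z Hz.
      rewrite Rmin_left in Hz by lra. unfold K.
      apply (continuous_mult (fun t => iter_int w n h (p * t)) (fun t => / t)).
      - apply (continuous_comp (fun t => p * t) (iter_int w n h)).
        + apply (continuous_mult (fun _ => p) (fun t : R => t)).
          apply continuous_const. apply continuous_id.
        + apply iter_cont; auto. nra.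
      - apply continuous_Rinv. lra. }
    assert (HL : is_RInt (fun t => (c / w ^ n) * / t) 1 (exp (/ w)) ((c / w ^ n) * / w)).
    { apply (is_RInt_scal (V:=R_NormedModule) (fun t => / t)). apply is_RInt_inv; auto. }
    assert (HG : is_RInt (fun t => (M / w ^ n) * / t) 1 (exp (/ w)) ((M / w ^ n) * / w)).
    { apply (is_RInt_scal (V:=R_NormedModule) (fun t => / t)). apply is_RInt_inv; auto. }
    assert (HD := is_RInt_minus _ _ _ _ _ _ HK HL).
    assert (Hw' : 0 < w ^ n) by (apply pow_lt; lra).
    assert (Hpt : forall t, 1 <= t <= exp (/ w) ->
      norm ((fun y : R => minus (K y) ((fun t : R => c / w ^ n * / t) y)) t) <=
      (fun t : R => M / w ^ n * / t) t).
    { intros t Ht. change (norm ?x) with (Rabs x). unfold minus, plus, opp; simpl.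
      unfold K.
      replace (iter_int w n h (p * t) / t + - (c / w ^ n * / t))
        with ((iter_int w n h (p * t) - c / w ^ n) * / t) by (field; lra).
      rewrite Rabs_mult, (Rabs_right (/ t)) by (apply Rle_ge, Rlt_le, Rinv_0_lt_compat; lra).
      apply Rmult_le_compat_r. apply Rlt_le, Rinv_0_lt_compat; lra.
      apply IH. nra.
      intros q Hq'. apply Hq. split. nra.
      rewrite S_INR, Rdiv_plus_distr, exp_plus.
      replace (1 / w) with (/ w) by (field; lra).
      assert (0 < exp (INR n / w)) by apply exp_pos.
      apply (Rle_trans _ _ _ (proj2 Hq')).
      rewrite (Rmult_comm (exp (INR n / w))), <- Rmult_assoc.
      apply Rmult_le_compat_r; nra. }
    assert (B := norm_RInt_le _ _ _ _ _ _ ltac:(left; exact HE) Hpt HD HG).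
    change (norm ?x) with (Rabs x) in B. unfold minus, plus, opp in B; simpl in B.
    replace (c / w ^ S n) with (c / w ^ n * / w) by (simpl; field; lra).
    replace (M / w ^ S n) with (M / w ^ n * / w) by (simpl; field; lra).
    exact B.
Qed.

Lemma powm1 i : powerRZ (-1) (1 - Z.of_nat (S i)) = (-1) ^ i.
Proof.
  replace (1 - Z.of_nat (S i))%Z with (- Z.of_nat i)%Z by lia.
  destruct i as [|i]. { simpl. reflexivity. }
  change (Z.of_nat (S i)) with (Z.pos (Pos.of_succ_nat i)). simpl.
  rewrite SuccNat2Pos.id_succ.
  rewrite Rinv_pow by lra. replace (/ -1) with (-1) by field. reflexivity.
Qed.

Definition coef (r i : nat) : R := powerRZ (-1) (1 - Z.of_nat (S i)) * Binomial.C r (S i).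

Lemma coef_sum r : (0 < r)%nat -> sum_f_R0 (coef r) (r - 1) = 1.
Proof.
  intros Hr.
  assert (Hb := binomial (-1) 1 r).
  replace (-1 + 1) with 0 in Hb by ring. rewrite pow_ne_zero in Hb by lia.
  rewrite decomp_sum in Hb by lia.
  replace (Init.Nat.pred r) with (r - 1)%nat in Hb by lia.
  unfold coef.
  assert (E : sum_f_R0 (fun i => powerRZ (-1) (1 - Z.of_nat (S i)) * Binomial.C r (S i)) (r - 1)
    = -1 * sum_f_R0 (fun i => Binomial.C r (S i) * (-1) ^ S i * 1 ^ (r - S i)) (r - 1)).
  { rewrite scal_sum.
    apply sum_eq. intros i _. rewrite powm1, pow1. simpl. ring. }
  rewrite E. assert (C0 : Binomial.C r 0 = 1).
  { unfold Binomial.C. rewrite Nat.sub_0_r. simpl. field. apply INR_fact_neq_0. }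
  rewrite C0, pow1 in Hb. change ((-1)^0) with 1 in Hb. lra.
Qed.

Lemma cont_sum (F : nat -> R -> R) n q :
  (forall i, (i <= n)%nat -> continuous (F i) q) ->
  continuous (fun P => sum_f_R0 (fun i => F i P) n) q.
Proof.
  induction n as [|n IH]; intros H.
  - simpl. apply H. lia.
  - simpl. apply (continuous_plus (U:=R_UniformSpace) (V:=R_NormedModule)
      (fun P => sum_f_R0 (fun i => F i P) n) (F (S n))).
    + apply IH. intros; apply H; lia.
    + apply H; lia.
Qed.

Lemma E_integrand_cont r w f k : (forall q, 0 < q -> continuous f q) ->
  forall q, 0 < q -> continuous (E_integrand r w f k) q.
Proof.
  intros Hf q Hq. unfold E_integrand. simpl.
  apply (cont_sum (fun i P => powerRZ (-1) (1 - Z.of_nat (S i)) * Binomial.C r (S i)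
       * f (exp (IZR k / w) * Rpower P (INR (S i) / INR r)))).
  intros i _.
  apply (continuous_mult (fun _ => powerRZ (-1) (1 - Z.of_nat (S i)) * Binomial.C r (S i))
     (fun P => f (exp (IZR k / w) * Rpower P (INR (S i) / INR r)))).
  apply continuous_const.
  apply (continuous_comp (fun P => exp (IZR k / w) * Rpower P (INR (S i) / INR r)) f).
  - apply (continuous_mult (fun _ => exp (IZR k / w)) (fun P => Rpower P (INR (S i) / INR r))).
    apply continuous_const. unfold Rpower.
    apply continuous_exp_comp.
    apply (continuous_mult (fun _ => INR (S i) / INR r) ln). apply continuous_const.
    apply (ex_derive_continuous (K:=R_AbsRing) (V:=R_NormedModule)). exists (/ q). apply is_derive_Reals, derivable_pt_lim_ln; lra.
  - apply Hf. apply Rmult_lt_0_compat; apply exp_pos.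
Qed.

Definition Acoef r := sum_f_R0 (fun i => Rabs (coef r i)) (r - 1).

Lemma Acoef_ge0 r : 0 <= Acoef r.
Proof.
  unfold Acoef. induction (r - 1)%nat as [|n IH]; simpl.
  apply Rabs_pos. assert (H := Rabs_pos (coef r (S n))). lra.
Qed.

Lemma E_integrand_bound r w f k P c eps : (0 < r)%nat ->
  (forall i, (i <= r - 1)%nat ->
     Rabs (f (exp (IZR k / w) * Rpower P (INR (S i) / INR r)) - c) <= eps) ->
  Rabs (E_integrand r w f k P - c) <= Acoef r * eps.
Proof.
  intros Hr H. unfold E_integrand; cbv beta zeta.
  rewrite <- (Rmult_1_r c). rewrite <- (coef_sum r Hr), scal_sum, <- minus_sum.
  eapply Rle_trans. apply Rsum_abs.
  unfold Acoef. rewrite Rmult_comm, scal_sum.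
  apply sum_Rle. intros i Hi. unfold coef.
  replace (powerRZ (-1) (1 - Z.of_nat (S i)) * Binomial.C r (S i) *
     f (exp (IZR k / w) * Rpower P (INR (S i) / INR r)) -
     powerRZ (-1) (1 - Z.of_nat (S i)) * Binomial.C r (S i) * c)
   with (powerRZ (-1) (1 - Z.of_nat (S i)) * Binomial.C r (S i) *
     (f (exp (IZR k / w) * Rpower P (INR (S i) / INR r)) - c)) by ring.
  rewrite Rabs_mult. apply Rmult_le_compat_l. apply Rabs_pos. apply H; auto.
Qed.

Lemma ex_sumZ_iff a : ex_sumZ a <->
  ex_series (fun n : nat => a (Z.of_nat n)) /\ ex_series (fun n : nat => a (- Z.of_nat n - 1)%Z).
Proof.
  split.
  - intros [l [l1 [l2 [H1 [H2 _]]]]]. split; eexists; eauto.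
  - intros [[l1 H1] [l2 H2]]. exists (l1 + l2), l1, l2. auto.
Qed.

Lemma sumZ_unique a l : is_sumZ a l -> sumZ a = l.
Proof.
  intros [l1 [l2 [H1 [H2 ->]]]]. unfold sumZ.
  rewrite (is_series_unique _ _ H1), (is_series_unique _ _ H2). reflexivity.
Qed.

Lemma sumZ_cmp a b : (forall k, Rabs (a k) <= b k) -> ex_sumZ b ->
  ex_sumZ a /\ Rabs (sumZ a) <= sumZ b.
Proof.
  intros H Hb. apply ex_sumZ_iff in Hb as [Hb1 Hb2].
  assert (E1 : ex_series (fun n : nat => Rabs (a (Z.of_nat n)))).
  { apply (ex_series_le (K:=R_AbsRing) (V:=R_CompleteNormedModule) _ _ ) with (2 := Hb1).
    intros n. change (norm ?x) with (Rabs x). rewrite Rabs_Rabsolu. apply H. }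
  assert (E2 : ex_series (fun n : nat => Rabs (a (- Z.of_nat n - 1)%Z))).
  { apply (ex_series_le (K:=R_AbsRing) (V:=R_CompleteNormedModule) _ _ ) with (2 := Hb2).
    intros n. change (norm ?x) with (Rabs x). rewrite Rabs_Rabsolu. apply H. }
  split.
  - apply ex_sumZ_iff. split.
    + apply (ex_series_le (K:=R_AbsRing) (V:=R_CompleteNormedModule) _ _ ) with (2 := Hb1).
      intros n. apply H.
    + apply (ex_series_le (K:=R_AbsRing) (V:=R_CompleteNormedModule) _ _ ) with (2 := Hb2).
      intros n. apply H.
  - unfold sumZ. eapply Rle_trans. apply Rabs_triang.
    apply Rplus_le_compat.
    + eapply Rle_trans. apply Series_Rabs; auto.
      apply Series_le; auto. intros n; split. apply Rabs_pos. apply H.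
    + eapply Rle_trans. apply Series_Rabs; auto.
      apply Series_le; auto. intros n; split. apply Rabs_pos. apply H.
Qed.

Lemma sumZ_lin a b al be : ex_sumZ a -> ex_sumZ b ->
  ex_sumZ (fun k => al * a k + be * b k) /\
  sumZ (fun k => al * a k + be * b k) = al * sumZ a + be * sumZ b.
Proof.
  intros Ha Hb. apply ex_sumZ_iff in Ha as [Ha1 Ha2]. apply ex_sumZ_iff in Hb as [Hb1 Hb2].
  assert (S1 : forall c (u : nat -> R), ex_series u -> ex_series (fun n => c * u n)).
  { intros c u Hu. apply (ex_series_scal_l (K:=R_AbsRing) (V:=R_NormedModule) c u Hu). }
  assert (S2 : forall (u v : nat -> R), ex_series u -> ex_series v -> ex_series (fun n => u n + v n)).
  { intros u v Hu Hv. apply (ex_series_plus (K:=R_AbsRing) (V:=R_NormedModule) u v Hu Hv). }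
  split.
  - apply ex_sumZ_iff. split.
    + apply (S2 (fun n => al * a (Z.of_nat n)) (fun n => be * b (Z.of_nat n))); auto.
    + apply (S2 (fun n => al * a (- Z.of_nat n - 1)%Z) (fun n => be * b (- Z.of_nat n - 1)%Z)); auto.
  - unfold sumZ.
    rewrite (Series_plus (fun n => al * a (Z.of_nat n)) (fun n => be * b (Z.of_nat n))); auto.
    rewrite (Series_plus (fun n => al * a (- Z.of_nat n - 1)%Z) (fun n => be * b (- Z.of_nat n - 1)%Z)); auto.
    rewrite !Series_scal_l. ring.
Qed.

Lemma CB_uc f : CB_comp f -> forall eps, 0 < eps -> exists delta, 0 < delta /\
  forall s t, Rabs (s - t) <= delta -> Rabs (f (exp s) - f (exp t)) <= eps.
Proof.
  intros [Hc [_ [a [b [Ha [Hab Hz]]]]]] eps Heps.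
  set (la := ln a). set (lb := ln b).
  assert (Hu := Heine (fun s => f (exp s)) (fun c => la - 1 <= c <= lb + 1) (compact_P3 _ _)).
  destruct (Hu ltac:(intros s _; apply continuity_pt_filterlim;
      apply (continuous_comp exp f); [apply continuous_exp_comp, continuous_id | apply Hc, exp_pos])
      (mkposreal eps Heps)) as [d Hd].
  simpl in Hd.
  assert (Z0 : forall s, s < la \/ lb < s -> f (exp s) = 0).
  { intros s Hs. apply Hz. apply exp_pos. destruct Hs as [Hs|Hs].
    - left. rewrite <- (exp_ln a) by lra. apply exp_increasing; auto.
    - right. rewrite <- (exp_ln b) by lra. apply exp_increasing; auto. }
  exists (Rmin (d / 2) (1 / 2)). split.
  { apply Rmin_glb_lt; [destruct d; simpl; lra | lra]. }
  intros s t Hst.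
  assert (H1 := Rmin_l (d / 2) (1 / 2)). assert (H2 := Rmin_r (d / 2) (1 / 2)).
  assert (Hd2 : 0 < d) by (destruct d; simpl; auto).
  apply Rabs_le_between' in Hst.
  destruct (Rle_dec (la - 1) s) as [s1|s1]; destruct (Rle_dec s (lb + 1)) as [s2|s2];
  destruct (Rle_dec (la - 1) t) as [t1|t1]; destruct (Rle_dec t (lb + 1)) as [t2|t2];
  try (rewrite (Z0 s), (Z0 t) by lra; rewrite Rminus_0_r, Rabs_R0; lra).
  apply Rlt_le, Hd; try lra. apply Rabs_def1; lra.
Qed.

Lemma ln_le' x y : 0 < x -> x <= y -> ln x <= ln y.
Proof.
  intros Hx [H|H]. left; apply ln_increasing; auto. subst; lra.
Qed.

Theorem theorem2 (r : nat) (chi f : R -> R) :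
  (0 < r)%nat -> is_kernel chi -> CB_comp f ->
  forall eps, 0 < eps -> exists W, forall w, W < w -> 0 < w ->
    forall x, 0 < x -> Rabs (E_op chi r w f x - f x) <= eps.
Proof.
  intros Hr Hk Hf eps Heps.
  destruct Hk as [_ [_ [_ [Hpu [[M0 HM0] Htail]]]]].
  pose proof Hf as Hf'. destruct Hf as [Hfc [[B HB] _]].
  assert (HB0 : 0 <= B) by (eapply Rle_trans; [apply Rabs_pos | apply (HB 1); lra]).
  set (A := Acoef r). assert (HA : 0 <= A) by apply Acoef_ge0.
  assert (HM : 0 <= Rabs M0) by apply Rabs_pos.
  set (e1 := Rmin 1 (eps / (2 * (A + 1) * (Rabs M0 + 1)))).
  assert (He1 : 0 < e1).
  { apply Rmin_glb_lt. lra. apply Rdiv_lt_0_compat. lra.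
    apply Rmult_lt_0_compat; lra. }
  assert (He1a : e1 <= 1) by apply Rmin_l.
  assert (He1b : e1 * (2 * (A + 1) * (Rabs M0 + 1)) <= eps).
  { assert (e1 <= eps / (2 * (A + 1) * (Rabs M0 + 1))) by apply Rmin_r.
    assert (0 < 2 * (A + 1) * (Rabs M0 + 1)) by (apply Rmult_lt_0_compat; lra).
    apply (Rmult_le_compat_r (2 * (A + 1) * (Rabs M0 + 1))) in H; [|lra].
    replace (eps / (2 * (A + 1) * (Rabs M0 + 1)) * (2 * (A + 1) * (Rabs M0 + 1))) with eps in H
      by (field; lra). lra. }
  set (tau := eps / (2 * (A + 2 * B + 1))).
  assert (Htau : 0 < tau) by (apply Rdiv_lt_0_compat; lra).
  assert (Htau2 : tau * (2 * (A + 2 * B + 1)) = eps) by (unfold tau; field; lra).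
  destruct (Htail tau Htau) as [g0 Hg0].
  set (gam := Rabs g0 + 1).
  assert (Hgam : g0 < gam) by (unfold gam; assert (H := Rle_abs g0); lra).
  assert (Hgam0 : 0 < gam) by (unfold gam; assert (H := Rabs_pos g0); lra).
  destruct (CB_uc f Hf' e1 He1) as [d [Hd Huc]].
  exists ((gam + INR r) / d). intros w Hw Hw0 x Hx.
  assert (Hwd : gam + INR r < w * d).
  { apply (Rmult_lt_compat_r d) in Hw; auto.
    replace ((gam + INR r) / d * d) with (gam + INR r) in Hw by (field; lra). lra. }
  assert (HrR : 0 <= INR r) by apply pos_INR.
  assert (Hgw : gam / w <= d).
  { apply Rle_div_l; auto. lra. }
  assert (Hrw : INR r / w <= d).
  { apply Rle_div_l; auto. lra. }
  set (u := Rpower x w).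
  assert (Hu : 0 < u) by (unfold u, Rpower; apply exp_pos).
  assert (Hlnu : ln u = w * ln x) by (unfold u; apply ln_Rpower).
  set (ch := fun k : Z => chi (exp (- IZR k) * u)).
  set (bk := fun k : Z => w ^ r * iter_int w r (E_integrand r w f k) 1).
  assert (C1 : forall k, Rabs (bk k - f (exp (IZR k / w))) <= A * e1).
  { intros k. unfold bk.
    assert (Hwr : 0 < w ^ r) by (apply pow_lt; lra).
    assert (HI := iter_bound w r (E_integrand r w f k) (f (exp (IZR k / w))) (A * e1) Hw0
      (E_integrand_cont r w f k Hfc) 1 ltac:(lra)).
    replace (w ^ r * iter_int w r (E_integrand r w f k) 1 - f (exp (IZR k / w)))
      with (w ^ r * (iter_int w r (E_integrand r w f k) 1 - f (exp (IZR k / w)) / w ^ r))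
      by (field; lra).
    rewrite Rabs_mult, (Rabs_right (w ^ r)) by lra.
    replace (A * e1) with (w ^ r * (A * e1 / w ^ r)) by (field; lra).
    apply Rmult_le_compat_l. lra.
    apply HI. intros q Hq. rewrite Rmult_1_l in Hq.
    apply E_integrand_bound; auto.
    intros i Hi. unfold Rpower.
    rewrite <- exp_plus. apply Huc.
    replace (IZR k / w + INR (S i) / INR r * ln q - IZR k / w) with (INR (S i) / INR r * ln q) by ring.
    assert (Hl0 : 0 <= ln q) by (rewrite <- ln_1; apply ln_le'; lra).
    assert (Hl1 : ln q <= INR r / w) by (rewrite <- (ln_exp (INR r / w)); apply ln_le'; lra).
    assert (Hal : 0 <= INR (S i) / INR r <= 1).
    { assert (0 < INR r) by (apply lt_0_INR; lia).
      assert (INR (S i) <= INR r) by (apply le_INR; lia).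
      assert (0 <= INR (S i)) by apply pos_INR.
      split. apply Rdiv_le_0_compat; lra.
      replace 1 with (INR r / INR r) by (field; lra).
      apply Rmult_le_compat_r. apply Rlt_le, Rinv_0_lt_compat; lra. lra. }
    rewrite Rabs_right by (apply Rle_ge, Rmult_le_pos; lra).
    apply Rle_trans with (ln q). 2: lra.
    apply Rle_trans with (1 * ln q); [apply Rmult_le_compat_r; lra | lra]. }
  assert (C2 : forall k, Rabs (IZR k - ln u) <= gam -> Rabs (f (exp (IZR k / w)) - f x) <= e1).
  { intros k Hk. replace (f x) with (f (exp (ln x))) by (rewrite exp_ln; auto). apply Huc.
    rewrite Hlnu in Hk.
    replace (IZR k / w - ln x) with ((IZR k - w * ln x) / w) by (field; lra).
    unfold Rdiv. rewrite Rabs_mult, (Rabs_right (/ w)) by (apply Rle_ge, Rlt_le, Rinv_0_lt_compat; lra).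
    apply Rle_trans with (gam / w); auto.
    apply Rmult_le_compat_r. apply Rlt_le, Rinv_0_lt_compat; lra. auto. }
  assert (C3 : forall k, Rabs (bk k - f x) <= A * e1 + 2 * B).
  { intros k. assert (H1 := C1 k).
    assert (H2 := HB (exp (IZR k / w)) (exp_pos _)). assert (H3 := HB x Hx).
    replace (bk k - f x) with ((bk k - f (exp (IZR k / w))) + f (exp (IZR k / w)) - f x) by ring.
    eapply Rle_trans. apply Rabs_triang. eapply Rle_trans.
    apply Rplus_le_compat_r. apply Rabs_triang.
    rewrite Rabs_Ropp. lra. }
  destruct (HM0 u Hu) as [Hexa HsA].
  assert (Hexc : ex_sumZ ch) by (exists 1; apply Hpu; auto).
  assert (Hs1 : sumZ ch = 1) by (apply sumZ_unique, Hpu; auto).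
  set (tl := fun k : Z => if Rlt_dec gam (Rabs (IZR k - ln u))
                          then Rabs (chi (exp (- IZR k) * u)) else 0).
  assert (Htl : Rabs (sumZ tl) < tau) by (apply Hg0; auto).
  assert (Hextl : ex_sumZ tl).
  { apply (sumZ_cmp tl (fun k => Rabs (chi (exp (- IZR k) * u)))); auto.
    intros k. unfold tl. destruct Rlt_dec. rewrite Rabs_Rabsolu; lra.
    rewrite Rabs_R0; apply Rabs_pos. }
  assert (Hexb : ex_sumZ (fun k => ch k * bk k)).
  { apply (sumZ_cmp _ (fun k => (A * e1 + B) * Rabs (chi (exp (- IZR k) * u))
                                 + 0 * Rabs (chi (exp (- IZR k) * u)))).
    - intros k. rewrite Rabs_mult. unfold ch.
      assert (Hb : Rabs (bk k) <= A * e1 + B).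
      { assert (H1 := C1 k). assert (H2 := HB (exp (IZR k / w)) (exp_pos _)).
        replace (bk k) with ((bk k - f (exp (IZR k / w))) + f (exp (IZR k / w))) by ring.
        eapply Rle_trans. apply Rabs_triang. lra. }
      rewrite Rmult_0_l, Rplus_0_r, Rmult_comm.
      apply Rmult_le_compat_r. apply Rabs_pos. auto.
    - apply sumZ_lin; auto. }
  destruct (sumZ_lin _ _ 1 (- f x) Hexb Hexc) as [Hexd Hsd].
  assert (HE : E_op chi r w f x - f x =
     sumZ (fun k => 1 * (ch k * bk k) + - f x * ch k)).
  { rewrite Hsd, Hs1. unfold E_op. fold u. unfold ch, bk. ring. }
  rewrite HE.
  set (d' := (A + 1) * e1). set (D := A * e1 + 2 * B).
  destruct (sumZ_lin _ _ d' D Hexa Hextl) as [Hexe Hse].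
  eapply Rle_trans.
  { apply (sumZ_cmp _ (fun k => d' * Rabs (chi (exp (- IZR k) * u)) + D * tl k)); auto.
    intros k.
    replace (1 * (ch k * bk k) + - f x * ch k) with (ch k * (bk k - f x)) by ring.
    rewrite Rabs_mult. unfold ch, tl. fold (ch k).
    assert (0 <= Rabs (ch k)) by apply Rabs_pos.
    assert (HC3 := C3 k). 
    destruct Rlt_dec as [Hlt|Hnlt].
    - fold (ch k). unfold D, d'.
      assert (Rabs (ch k) * Rabs (bk k - f x) <= Rabs (ch k) * (A * e1 + 2 * B))
        by (apply Rmult_le_compat_l; auto).
      assert (0 <= (A + 1) * e1 * Rabs (ch k)) by (apply Rmult_le_pos; [apply Rmult_le_pos|]; lra).
      nra.
    - fold (ch k). apply Rnot_lt_le in Hnlt.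
      assert (Hc2 := C2 k Hnlt). assert (Hc1 := C1 k).
      assert (Rabs (bk k - f x) <= (A + 1) * e1).
      { replace (bk k - f x) with ((bk k - f (exp (IZR k / w))) + (f (exp (IZR k / w)) - f x)) by ring.
        eapply Rle_trans. apply Rabs_triang. lra. }
      unfold d'. rewrite Rmult_0_r, Rplus_0_r, (Rmult_comm _ (Rabs (ch k))).
      apply Rmult_le_compat_l; auto. }
  rewrite Hse.
  assert (Hd' : 0 <= d') by (unfold d'; apply Rmult_le_pos; lra).
  assert (HD : 0 <= D) by (unfold D; apply Rplus_le_le_0_compat; [apply Rmult_le_pos|]; lra).
  assert (T1 : d' * sumZ (fun k => Rabs (chi (exp (- IZR k) * u))) <= d' * Rabs M0).
  { apply Rmult_le_compat_l; auto. assert (H := Rle_abs M0). lra. }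
  assert (T2 : D * sumZ tl <= D * tau).
  { apply Rmult_le_compat_l; auto. assert (H := Rle_abs (sumZ tl)). lra. }
  assert (T3 : d' * Rabs M0 <= eps / 2).
  { unfold d'. assert (e1 * (A + 1) * Rabs M0 <= e1 * (A + 1) * (Rabs M0 + 1)).
    { apply Rmult_le_compat_l. apply Rmult_le_pos; lra. lra. }
    nra. }
  assert (T4 : D * tau <= eps / 2).
  { unfold D. assert (A * e1 <= A) by (rewrite <- (Rmult_1_r A) at 2; apply Rmult_le_compat_l; lra).
    assert ((A * e1 + 2 * B) * tau <= (A + 2 * B) * tau) by (apply Rmult_le_compat_r; lra).
    nra. }
  lra.
Qed.
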